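(* Let $G$ be a finite digraph with blocks $B_1,\dots,B_k$, and suppose $G$ has exactly $t$ cut-vertices $v^c_1,\dots,v^c_t$, with cut-indices $T(1),T(2),\dots,T(t)$ respectively. Then the number of $\mathcal{B}$-partitions of $G$ is $$\prod_{i=1}^{t} T(i).$$
   Context: A digraph $G=(V(G),E(G))$ consists of a finite vertex set $V(G)$ and an edge set $E(G)\subseteq V(G)\times V(G)$ (loops $(u,u)$ are allowed). A subdigraph $H$ of $G$ has $V(H)\subseteq V(G)$ and $E(H)\subseteq E(G)$; it is induced if whenever $u,v\in V(H)$ and $(u,v)\in E(G)$ then $(u,v)\in E(H)$. A digraph with empty vertex set is called a null graph. A path between $v_1$ and $v_k$ is a sequence of distinct vertices $v_1,\dots,v_k$ such that for each $i$, $(v_i,v_{i+1})\in E(G)$ or $(v_{i+1},v_i)\in E(G)$; $G$ is connected if any two distinct vertices are joined by a path, and a component is a maximal connected subdigraph. A cut-vertex of $G$ is a vertex whose removal increases the number of components. A block of $G$ is a maximal connected subdigraph of $G$ that has no cut-vertex (of itself). The cut-index of a cut-vertex $v$ of $G$ is the number of blocks of $G$ containing $v$. If $G$ has blocks $B_1,\dots,B_k$, a $\mathcal{B}$-partition of $G$ is a $k$-tuple $(\hat B_1,\dots,\hat B_k)$ of pairwise vertex-disjoint induced subdigraphs of $G$ whose vertex sets together cover $V(G)$, such that $\hat B_i$ is an (induced) subdigraph of $B_i$ for each $i=1,\dots,k$; some $\hat B_i$ may be null graphs. *)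

(* Defs.v *)
From mathcomp Require Import all_boot.
From mathcomp Require Import boolp.

Set Implicit Arguments.
Unset Strict Implicit.
Unset Printing Implicit Defensive.

Section Digraphs.
Variable V : finType.

(* A digraph on (a subset of) the finite vertex universe V:
   a vertex set and an edge set (loops allowed). *)
Definition dgraph := ({set V} * {set (V * V)})%type.

Definition vset (G : dgraph) : {set V} := G.1.
Definition eset (G : dgraph) : {set (V * V)} := G.2.

Definition is_digraph (G : dgraph) : bool :=
  [forall e in eset G, (e.1 \in vset G) && (e.2 \in vset G)].

Definition subdigraph (H G : dgraph) : bool :=
  [&& is_digraph H, vset H \subset vset G & eset H \subset eset G].

Definition induced_sub (H G : dgraph) : bool :=
  subdigraph H G &&
  [forall u in vset H, forall v in vset H,
      ((u, v) \in eset G) ==> ((u, v) \in eset H)].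

Definition adj (H : dgraph) : rel V :=
  fun u v => ((u, v) \in eset H) || ((v, u) \in eset H).

Definition joined (H : dgraph) (x y : V) : Prop :=
  exists s : seq V,
    [/\ uniq (x :: s), all (fun v => v \in vset H) (x :: s),
        path (adj H) x s & last x s = y].

Definition connected (H : dgraph) : Prop :=
  forall x y, x \in vset H -> y \in vset H -> x != y -> joined H x y.

Definition component (H G : dgraph) : Prop :=
  [/\ subdigraph H G, connected H &
      forall H', subdigraph H' G -> connected H' -> subdigraph H H' -> H' = H].

Definition ncomp (G : dgraph) : nat := #|[set H : dgraph | `[< component H G >]]|.

Definition del_vertex (G : dgraph) (v : V) : dgraph :=
  (vset G :\ v, [set e in eset G | (e.1 != v) && (e.2 != v)]).

Definition cut_vertex (G : dgraph) (v : V) : Prop :=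
  v \in vset G /\ ncomp G < ncomp (del_vertex G v).

Definition block_prop (H : dgraph) : Prop :=
  connected H /\ forall v, ~ cut_vertex H v.

Definition block (H G : dgraph) : Prop :=
  [/\ subdigraph H G, block_prop H &
      forall H', subdigraph H' G -> block_prop H' -> subdigraph H H' -> H' = H].

Definition cut_index (G : dgraph) (v : V) : nat :=
  #|[set H : dgraph | `[< block H G >] && (v \in vset H)]|.

Definition B_partition (G : dgraph) (k : nat) (B : 'I_k -> dgraph)
    (P : {ffun 'I_k -> dgraph}) : bool :=
  [&& [forall i, induced_sub (P i) G && subdigraph (P i) (B i)],
      [forall i, forall j, (i != j) ==> [disjoint vset (P i) & vset (P j)]] &
      \bigcup_(i < k) vset (P i) == vset G].

End Digraphs.

(* Main.v *)
Require Import Defs.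
From mathcomp Require Import all_boot.
From mathcomp Require Import boolp.

Set Implicit Arguments.
Unset Strict Implicit.
Unset Printing Implicit Defensive.

Section Proofs.
Variable V : finType.
Implicit Types (G H K C : dgraph V) (x y u v w z : V).

Definition radj G : rel V :=
  fun x y => [&& x \in vset G, y \in vset G & adj G x y].

Lemma radj_sym G : symmetric (radj G).
Proof.
by move=> x y; rewrite /radj /adj orbC; case: (x \in _); case: (y \in _).
Qed.

Lemma csym G x y : connect (radj G) x y -> connect (radj G) y x.
Proof. by rewrite (sym_connect_sym (radj_sym G)). Qed.

Lemma path_in G x s : path (radj G) x s -> all (fun v => v \in vset G) s.
Proof.
elim: s x => //= y s IH x /andP[/and3P[_ hy _] hp]; by rewrite hy (IH y hp).
Qed.

Lemma path_adj_radj G x s :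
  path (adj G) x s -> all (fun v => v \in vset G) (x :: s) -> path (radj G) x s.
Proof.
elim: s x => //= y s IH x /andP[ha hp] /and3P[hx hy hall].
by rewrite /radj hx hy ha /=; apply: IH => //=; rewrite hy hall.
Qed.

Lemma joinedE G x y : joined G x y <-> x \in vset G /\ connect (radj G) x y.
Proof.
split.
  move=> [s [hu hall hp hl]]; move: (hall) => /= /andP[hx _]; split => //.
  apply/connectP; exists s => //; exact: path_adj_radj.
move=> [hx /connectP[p hp ->]].
case/shortenP: hp => p' hp' hu _.
exists p'; split => //=; first by rewrite hx (path_in hp').
by apply: sub_path hp' => a b /and3P[].
Qed.

Lemma connectedE G :
  connected G <-> {in vset G &, forall x y, connect (radj G) x y}.
Proof.
split.
  move=> hc x y hx hy; case: (eqVneq x y) => [->|hxy]; first exact: connect0.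
  by case/joinedE: (hc x y hx hy hxy).
by move=> hc x y hx hy _; apply/joinedE; split => //; apply: hc.
Qed.

Definition connectedb G :=
  [forall x in vset G, forall y in vset G, connect (radj G) x y].

Lemma connectedP G : reflect (connected G) (connectedb G).
Proof.
apply: (iffP idP).
  move=> /forall_inP h; apply/connectedE => x y hx hy.
  exact: (forall_inP (h x hx) y hy).
move/connectedE => h; apply/forall_inP => x hx; apply/forall_inP => y hy.
exact: h.
Qed.

Definition subg H K := (vset H \subset vset K) && (eset H \subset eset K).

Lemma radj_mono H K : subg H K -> subrel (radj H) (radj K).
Proof.
move=> /andP[/subsetP hv /subsetP he] x y /and3P[hx hy ha].
by rewrite /radj (hv _ hx) (hv _ hy) /=; move: ha; rewrite /adj => /orP[/he->|/he->]; rewrite ?orbT.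
Qed.

Lemma connect_mono H K x y :
  subg H K -> connect (radj H) x y -> connect (radj K) x y.
Proof.
move=> hs; apply: connect_sub => a b hab; apply: connect1; exact: radj_mono hab.
Qed.

Lemma subdig_subg H K : subdigraph H K -> subg H K.
Proof. by case/and3P => _ a b; rewrite /subg a b. Qed.

Lemma subdig_wf H K : subdigraph H K -> is_digraph H.
Proof. by case/and3P. Qed.

Lemma wfP G : reflect (forall e, e \in eset G -> (e.1 \in vset G) && (e.2 \in vset G))
  (is_digraph G).
Proof. exact: forall_inP. Qed.

Lemma subdig_refl G : is_digraph G -> subdigraph G G.
Proof. by move=> hw; rewrite /subdigraph hw !subxx. Qed.

Lemma dg_eq H K : vset H = vset K -> eset H = eset K -> H = K.
Proof. by case: H => a b; case: K => c d /= -> ->. Qed.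

Lemma subdig_antisym H K : subdigraph H K -> subdigraph K H -> H = K.
Proof.
case/and3P => _ h1 h2; case/and3P => _ h3 h4.
by apply: dg_eq; apply/eqP; rewrite eqEsubset ?h1 ?h2 ?h3 ?h4.
Qed.

Lemma subdig_trans H K G : subdigraph H K -> subdigraph K G -> subdigraph H G.
Proof.
case/and3P => hw h1 h2; case/and3P => _ h3 h4.
by rewrite /subdigraph hw (subset_trans h1 h3) (subset_trans h2 h4).
Qed.

Lemma wf_del G v : is_digraph G -> is_digraph (del_vertex G v).
Proof.
move/wfP => h; apply/wfP => e; rewrite /= inE => /andP[he /andP[h1 h2]].
by case/andP: (h e he) => a b; rewrite !inE h1 h2 a b.
Qed.

Lemma subg_del G v : subg (del_vertex G v) G.
Proof.
apply/andP; split; apply/subsetP => x; rewrite !inE; by case/andP.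
Qed.

Lemma subg_del2 H K w : subg H K -> subg (del_vertex H w) (del_vertex K w).
Proof.
move=> /andP[/subsetP hv /subsetP he]; apply/andP; split; apply/subsetP => x;
  rewrite /= !inE => /andP[a b].
  by rewrite a hv.
by rewrite b he.
Qed.

Lemma subg_trans H K G : subg H K -> subg K G -> subg H G.
Proof.
move=> /andP[a b] /andP[c d]; by rewrite /subg (subset_trans a c) (subset_trans b d).
Qed.

Lemma conn_small H : #|vset H| <= 1 -> connected H.
Proof.
move/card_le1P => h; apply/connectedE => x y hx hy.
by move: (h x hx y); rewrite hy inE => /esym/eqP ->; apply: connect0.
Qed.

Lemma conn_in G x y : x \in vset G -> connect (radj G) x y -> y \in vset G.
Proof.
move=> hx /connectP[p hp ->].
have: all (fun v => v \in vset G) (x :: p) by rewrite /= hx (path_in hp).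
by move/allP; apply; apply: mem_last.
Qed.

Lemma radj_del H w x y :
  radj H x y -> x != w -> y != w -> radj (del_vertex H w) x y.
Proof.
move=> /and3P[hx hy]; rewrite /radj /adj /= !inE hx hy => ha hxw hyw /=.
rewrite hxw hyw /=; case/orP: ha => ->; by rewrite /= ?hxw ?hyw ?orbT.
Qed.

Lemma conn_del_from H w z : connect (radj (del_vertex H w)) w z -> z = w.
Proof.
move/connectP => [[|y p] //= /andP[/and3P[]]]; by rewrite /= !inE eqxx.
Qed.

Lemma path_del H w y s :
  path (radj H) y s -> w \notin y :: s -> path (radj (del_vertex H w)) y s.
Proof.
elim: s y => //= a s IH y /andP[h hp]; rewrite in_cons negb_or => /andP[hy ha].
move: (ha); rewrite in_cons negb_or => /andP[haw _].
rewrite radj_del // ?(eq_sym a) ?(eq_sym y) //=; exact: IH.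
Qed.

Lemma path_split H w x s z :
  uniq (x :: s) -> path (radj H) x s -> z \in x :: s -> z != w ->
  connect (radj (del_vertex H w)) x z \/
  connect (radj (del_vertex H w)) z (last x s).
Proof.
elim: s x => [|y s IH] x.
  by rewrite /= inE => _ _ /eqP -> _; left; apply: connect0.
move=> hu /= /andP[hxy hp] hz hzw.
case: (eqVneq z x) => [->|hzx]; first by left; apply: connect0.
have hz' : z \in y :: s by move: hz; rewrite inE (negbTE hzx).
move: hu; rewrite [uniq _]/= => /andP[hxn hu].
case: (IH y hu hp hz' hzw) => [h|h]; last by right.
case: (eqVneq x w) => [exw|hxw].
  right; have hp' : path (radj (del_vertex H w)) y s by apply: (path_del hp); rewrite -exw.
  apply: connect_trans (csym h) _; apply/connectP; by exists s.
case: (eqVneq y w) => [eyw|hyw].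
  by move: h; rewrite eyw => /conn_del_from; move/eqP: hzw.
left; apply: connect_trans (connect1 _) h; exact: radj_del.
Qed.

End Proofs.

Section Proofs2.
Variable V : finType.
Implicit Types (G H K C : dgraph V) (x y u v w z : V) (S : {set V}).

Definition cls G x := [set y | connect (radj G) x y].
Definition indg G (S : {set V}) : dgraph V :=
  (S, [set e in eset G | (e.1 \in S) && (e.2 \in S)]).
Definition classes G := [set cls G x | x in vset G].

Lemma indg_wf G S : is_digraph (indg G S).
Proof. apply/wfP => e; rewrite /= inE; by case/andP. Qed.

Lemma indg_sub G S : S \subset vset G -> subdigraph (indg G S) G.
Proof.
move=> hS; rewrite /subdigraph indg_wf hS /=.
by apply/subsetP => e; rewrite inE; case/andP.
Qed.

Lemma cls_eq G x y : connect (radj G) x y -> cls G x = cls G y.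
Proof.
move=> h; apply/setP => z; rewrite !inE; apply/idP/idP => h2.
  exact: connect_trans (csym h) h2.
exact: connect_trans h h2.
Qed.

Lemma cls_sub G x : x \in vset G -> cls G x \subset vset G.
Proof. by move=> hx; apply/subsetP => y; rewrite inE; apply: conn_in. Qed.

Lemma cls_conn G x : x \in vset G -> connected (indg G (cls G x)).
Proof.
move=> hx; set K := indg G (cls G x).
have key : forall p u, connect (radj K) x u -> path (radj G) u p ->
    connect (radj K) x (last u p).
  elim=> [|w p IH] u; first by [].
  move=> hxu /= /andP[huw hp]; apply: (IH w _ hp).
  have hu : u \in cls G x.
    by rewrite inE; apply: (connect_mono _ hxu); apply/andP; split;
      [exact: cls_sub | apply/subsetP => e; rewrite inE; case/andP].
  apply: (connect_trans hxu (connect1 _)).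
  have hw : w \in cls G x by move: (hu); rewrite !inE => h; apply: (connect_trans h (connect1 huw)).
  move: (huw) => /and3P[_ _ ha]; rewrite /radj /K /= hu hw /=.
  by move: hu hw ha; rewrite /adj /eset /indg /= !inE /= => -> ->; rewrite !andbT.
have hK : forall y, y \in cls G x -> connect (radj K) x y.
  move=> y; rewrite inE => /connectP[p hp ->]; apply: key hp; exact: connect0.
apply/connectedE => y z hy hz; exact: connect_trans (csym (hK y hy)) (hK z hz).
Qed.

Lemma comp_cls G x : is_digraph G -> x \in vset G -> component (indg G (cls G x)) G.
Proof.
move=> hG hx; split; [exact: indg_sub (cls_sub hx) | exact: cls_conn |].
move=> H' hH' hc hKH'.
have hxH' : x \in vset H'.
  by case/and3P: hKH' => _ /subsetP h _; apply: h; rewrite /= inE connect0.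
have hv : vset H' \subset cls G x.
  apply/subsetP => y hy; rewrite inE.
  apply: connect_mono (subdig_subg hH') _.
  by move/connectedE: hc; apply.
apply: subdig_antisym => //; rewrite /subdigraph (subdig_wf hH') hv /=.
apply/subsetP => e he; rewrite inE.
case/and3P: hH' => /wfP hw _ /subsetP hs.
by rewrite hs //= !(subsetP hv) //; case/andP: (hw e he).
Qed.

Lemma comp_eq G C x : is_digraph G -> component C G -> x \in vset C ->
  C = indg G (cls G x).
Proof.
move=> hG [hCG hC hmax] hx.
have hxG : x \in vset G by case/and3P: hCG => _ /subsetP h _; exact: h.
symmetry; apply: hmax; first exact: indg_sub (cls_sub hxG).
  exact: cls_conn.
rewrite /subdigraph (subdig_wf hCG) /=.
have hv : vset C \subset cls G x.
  apply/subsetP => y hy; rewrite inE; apply: connect_mono (subdig_subg hCG) _.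
  by move/connectedE: hC; apply.
rewrite hv /=; apply/subsetP => e he; rewrite inE.
case/and3P: hCG => /wfP hw _ /subsetP hs.
by rewrite hs //= !(subsetP hv) //; case/andP: (hw e he).
Qed.

Lemma compE G x0 : is_digraph G -> x0 \in vset G ->
  [set C | `[< component C G >]] = indg G @: classes G.
Proof.
move=> hG hx0; apply/setP => C; rewrite inE; apply/asboolP/idP.
  move=> hc; case: (set_0Vmem (vset C)) => [e0|[x hx]].
    have hK := comp_cls hG hx0; case: hc => hCG hC hmax.
    have: indg G (cls G x0) = C.
      apply: hmax; [exact: indg_sub (cls_sub hx0) | exact: cls_conn |].
      rewrite /subdigraph (subdig_wf hCG) e0 sub0set /=; apply/subsetP => e he.
      by move: (subdig_wf hCG) => /wfP hw; move: (hw e he); rewrite e0 in_set0.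
    by move/(congr1 (@vset V))=> /= /setP /(_ x0); rewrite e0 !inE connect0.
  have hxG : x \in vset G by case: hc => /and3P[_ /subsetP h _] _ _; apply: h.
  rewrite (comp_eq hG hc hx); apply/imsetP; exists (cls G x) => //.
  by apply/imsetP; exists x.
case/imsetP => S /imsetP [x hx ->] ->; exact: comp_cls.
Qed.

Lemma ncompE G x0 : is_digraph G -> x0 \in vset G -> ncomp G = #|classes G|.
Proof.
move=> hG hx; rewrite /ncomp (compE hG hx) card_imset //.
by move=> S1 S2 /(congr1 fst).
Qed.

Lemma ncomp_conn G : is_digraph G -> connected G -> ncomp G = 1.
Proof.
move=> hG hc; rewrite /ncomp -(cards1 G).
suff -> : [set C | `[< component C G >]] = [set G] by [].
apply/setP => C.
rewrite !inE; apply/asboolP/eqP.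
  case=> hCG _ hmax; symmetry; exact: hmax (subdig_refl hG) hc hCG.
move=> ->; split => //; first exact: subdig_refl.
by move=> H' h1 _ h2; apply: subdig_antisym.
Qed.

Lemma ncomp_disc G : is_digraph G -> ~ connected G -> 1 < ncomp G.
Proof.
move=> hG hnc.
have: ~~ connectedb G by apply/negP => /connectedP.
case/forall_inPn => x hx /forall_inPn [y hy hxy].
rewrite (ncompE hG hx); apply/card_gt1P; exists (cls G x), (cls G y).
split; [by apply/imsetP; exists x | by apply/imsetP; exists y | ].
apply/negP => /eqP heq; move: (congr1 (fun S => y \in S) heq); rewrite !inE connect0 => h.
by rewrite h in hxy.
Qed.

Lemma cutE H w : is_digraph H -> connected H ->
  (cut_vertex H w <-> w \in vset H /\ ~ connected (del_vertex H w)).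
Proof.
move=> hH hc; rewrite /cut_vertex (ncomp_conn hH hc); split.
  move=> [hw hlt]; split => // hc'.
  by rewrite (ncomp_conn (wf_del w hH) hc') in hlt.
move=> [hw hnc]; split => //; exact: ncomp_disc (wf_del w hH) hnc.
Qed.

Lemma blockP_intro H : is_digraph H -> connected H ->
  (forall w, w \in vset H -> connected (del_vertex H w)) -> block_prop H.
Proof.
move=> hH hc hd; split => // w /(cutE w hH hc) [hw hn]; exact: hn (hd w hw).
Qed.

Lemma del_notin H w : is_digraph H -> w \notin vset H -> del_vertex H w = H.
Proof.
move=> /wfP hH hw; apply: dg_eq => /=.
  apply/setP => x; rewrite !inE; case: eqVneq => // ->; by rewrite (negbTE hw).
apply/setP => e; rewrite inE; case he: (e \in eset H) => //=.
case/andP: (hH e he) => h1 h2.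
by apply/andP; split; apply/eqP => h; move: hw; rewrite -h ?h1 ?h2.
Qed.

Lemma block_del H w : is_digraph H -> block_prop H -> connected (del_vertex H w).
Proof.
move=> hH [hc hn]; case hw: (w \in vset H); last by rewrite del_notin ?hw.
apply/connectedP; apply/negPn/negP => hb.
apply: (hn w); apply/(cutE w hH hc); split => //; by move/connectedP; apply/negP.
Qed.

Lemma conn_sup H H' : connected H -> vset H = vset H' -> eset H \subset eset H' ->
  connected H'.
Proof.
move=> /connectedE hc hv he; apply/connectedE => x y; rewrite -hv => hx hy.
apply: connect_mono (hc x y hx hy); by rewrite /subg hv subxx he.
Qed.

End Proofs2.

Section Proofs3.
Variable V : finType.
Implicit Types (G H K C : dgraph V) (x y u v w z : V) (S W : {set V}).

Lemma max_ext (P : dgraph V -> Prop) G K0 : P K0 -> subdigraph K0 G ->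
  exists K, [/\ P K, subdigraph K G, subdigraph K0 K &
    forall K', subdigraph K' G -> P K' -> subdigraph K K' -> K' = K].
Proof.
move=> hP hK0.
pose S := [pred K | `[< P K >] && subdigraph K G && subdigraph K0 K].
pose sz (K : dgraph V) := #|vset K| + #|eset K|.
have hS0 : S K0.
  apply/andP; split; [apply/andP; split; [exact/asboolP|done]|].
  exact: subdig_refl (subdig_wf hK0).
case: (arg_maxnP sz hS0) => K /andP[/andP[/asboolP hPK hKG] hK0K] hmax.
exists K; split => // K' hK'G hPK' hKK'.
have hS' : S K'.
  apply/andP; split; [apply/andP; split; [exact/asboolP|done]|].
  exact: subdig_trans hK0K hKK'.
have := hmax K' hS'; rewrite /sz.
case/and3P: hKK' => _ h1 h2 hle.
have a := subset_leq_card h1; have b := subset_leq_card h2.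
apply: dg_eq; apply/eqP; rewrite eq_sym eqEcard ?h1 ?h2 /=.
  by rewrite -(leq_add2r #|eset K'|); apply: leq_trans hle _; rewrite leq_add2l.
by rewrite -(leq_add2l #|vset K'|); apply: leq_trans hle _; rewrite leq_add2r.
Qed.

Lemma sub_indg H G W : subdigraph H G -> vset H \subset W -> subdigraph H (indg G W).
Proof.
move=> hHG hW; rewrite /subdigraph (subdig_wf hHG) hW /=.
apply/subsetP => e he; rewrite inE.
case/and3P: hHG => /wfP hw _ /subsetP hs.
by case/andP: (hw e he) => h1 h2; rewrite hs //= !(subsetP hW).
Qed.

Lemma block_induced G H e : is_digraph G -> block H G -> e \in eset G ->
  e.1 \in vset H -> e.2 \in vset H -> e \in eset H.
Proof.
move=> hG [hHG hbp hmax] he h1 h2.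
have hwH := subdig_wf hHG.
have hvs : vset H \subset vset G by case/and3P: hHG.
set H' := indg G (vset H).
have hsub : eset H \subset eset H'.
  apply/subsetP => f hf; rewrite inE.
  case/and3P: hHG => /wfP hw _ /subsetP hs.
  by rewrite hs //=; apply: hw.
have hbp' : block_prop H'.
  apply: blockP_intro; first exact: indg_wf.
    exact: (@conn_sup _ H H' hbp.1 erefl hsub).
  move=> w _; apply: (@conn_sup _ (del_vertex H w) (del_vertex H' w) (block_del (w:=w) hwH hbp)) => //.
  apply/subsetP => f; rewrite inE => /andP[hf hc]; rewrite inE hc andbT; exact: (subsetP hsub).
have : H' = H.
  apply: (hmax H' _ hbp'); first exact: indg_sub.
  by rewrite /subdigraph hwH subxx hsub.
by move <-; rewrite /= inE he h1 h2.
Qed.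

Lemma block_ext G K0 : block_prop K0 -> subdigraph K0 G ->
  exists B, block B G /\ subdigraph K0 B.
Proof.
move=> hb hs; case: (max_ext hb hs) => K [hK hKG hK0K hmax].
by exists K; split.
Qed.

Lemma vertex_in_block G x : x \in vset G -> exists B, block B G /\ x \in vset B.
Proof.
move=> hx; pose K0 : dgraph V := ([set x], set0).
have hwf : is_digraph K0 by apply/wfP => e; rewrite /= in_set0.
have hs : subdigraph K0 G by rewrite /subdigraph hwf /= sub1set hx sub0set.
have hb : block_prop K0.
  apply: blockP_intro => //; first by apply: conn_small; rewrite cards1.
  move=> w _; apply: conn_small => /=.
  by rewrite (leq_trans (subset_leq_card (subsetDl _ _))) ?cards1.
case: (block_ext hb hs) => B [hB hK0B]; exists B; split => //.
by case/and3P: hK0B => _ /subsetP h _; apply: h; rewrite /= inE.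
Qed.

Lemma path_restrict G W x s : path (radj G) x s ->
  all (fun z => z \in W) (x :: s) -> path (radj (indg G W)) x s.
Proof.
elim: s x => //= y s IH x /andP[hxy hp] /and3P[hx hy hall].
rewrite IH ?hy // andbT.
move: hxy => /and3P[_ _]; rewrite /radj /adj /= hx hy !inE /= hx hy !andbT //.
Qed.

Lemma path_mono H K x s : subg H K -> path (radj H) x s -> path (radj K) x s.
Proof. move=> hs; apply: sub_path; exact: radj_mono. Qed.

Lemma Akey G B1 B2 v a b : is_digraph G -> block B1 G -> block B2 G ->
  v \in vset B1 -> v \in vset B2 -> a \in vset B1 -> a != v ->
  b \in vset B2 -> b != v -> connect (radj (del_vertex G v)) a b -> B1 = B2.
Proof.
move=> hG hB1 hB2 hv1 hv2 ha1 hav hb2 hbv hab.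
case: (hB1) => hB1G hbp1 hmax1; case: (hB2) => hB2G hbp2 hmax2.
have hwB1 := subdig_wf hB1G; have hwB2 := subdig_wf hB2G.
have hV1 : vset B1 \subset vset G by case/and3P: hB1G.
have hV2 : vset B2 \subset vset G by case/and3P: hB2G.
have haG : a \in vset (del_vertex G v) by rewrite /= !inE hav (subsetP hV1).
case: (proj2 (joinedE _ _ _) (conj haG hab)) => s [hu hall hp hl].
pose T := [set z | z \in a :: s].
pose W := vset B1 :|: vset B2 :|: T.
pose K := indg G W.
have hTv : forall z, z \in a :: s -> (z \in vset G) && (z != v).
  by move=> z hz; move/allP: hall => /(_ z hz); rewrite /= !inE andbC.
have hWG : W \subset vset G.
  apply/subsetP => z; rewrite !inE => /orP[/orP[h|h]|h].
  - exact: (subsetP hV1).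
  - exact: (subsetP hV2).
  - by case/andP: (hTv z h).
have hKG : subdigraph K G := indg_sub hWG.
have hB1K : subdigraph B1 K.
  by apply: sub_indg => //; apply/subsetP => z hz; rewrite !inE hz.
have hB2K : subdigraph B2 K.
  by apply: sub_indg => //; apply/subsetP => z hz; rewrite !inE hz orbT.
have hpG : path (radj G) a s.
  apply: path_mono (subg_del G v) _; apply: path_adj_radj => //.
have hpK : path (radj K) a s.
  apply: path_restrict hpG _; apply/allP => z hz; by rewrite /W /T !in_setU in_set hz !orbT.
have hvn : v \notin a :: s by apply/negP => /hTv /andP[_]; rewrite eqxx.
have hpKv : path (radj (del_vertex K v)) a s by apply: path_del.
have hconB : forall Bi w z, block Bi G -> subdigraph Bi K ->
    v \in vset Bi -> z \in vset Bi -> w != v -> z != w ->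
    connect (radj (del_vertex K w)) v z.
  move=> Bi w z [hBiG hbpi _] hBiK hvi hzi hwv hzw.
  apply: (connect_mono (subg_del2 w (subdig_subg hBiK))).
  move: (block_del (w:=w) (subdig_wf hBiG) hbpi) => /connectedE; apply.
    by rewrite /= !inE hvi eq_sym hwv.
  by rewrite /= !inE hzi hzw.
have c2 : forall z, z \in W -> z != v -> connect (radj (del_vertex K v)) a z.
  have hB : forall Bi z x, block Bi G -> subdigraph Bi K -> x \in vset Bi ->
      z \in vset Bi -> x != v -> z != v -> connect (radj (del_vertex K v)) x z.
    move=> Bi z x [hBiG hbpi _] hBiK hxi hzi hxv hzv.
    apply: (connect_mono (subg_del2 v (subdig_subg hBiK))).
    move: (block_del (w:=v) (subdig_wf hBiG) hbpi) => /connectedE; apply;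
      by rewrite /= !inE ?hxi ?hzi ?hxv ?hzv.
  move=> z; rewrite !inE => /orP[/orP[h|h]|h] hzv.
  - exact: hB hB1 hB1K ha1 h hav hzv.
  - apply: connect_trans (hB _ _ _ hB2 hB2K hb2 h hbv hzv).
    by apply/connectP; exists s.
  - exact: path_connect hpKv _ h.
have c1 : forall w z, w != v -> z \in W -> z != w -> connect (radj (del_vertex K w)) v z.
  move=> w z hwv; rewrite !inE => /orP[/orP[h|h]|h] hzw.
  - exact: hconB hB1 hB1K hv1 h hwv hzw.
  - exact: hconB hB2 hB2K hv2 h hwv hzw.
  case: (path_split hu hpK h hzw) => hc.
    case: (eqVneq a w) => [eaw|haw].
      by move: hc; rewrite eaw => /conn_del_from heq; move: hzw; rewrite heq eqxx.
    exact: connect_trans (hconB _ _ _ hB1 hB1K hv1 ha1 hwv haw) hc.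
  rewrite hl in hc.
  case: (eqVneq b w) => [ebw|hbw].
    by move: (csym hc); rewrite ebw => /conn_del_from heq; move: hzw; rewrite heq eqxx.
  exact: connect_trans (hconB _ _ _ hB2 hB2K hv2 hb2 hwv hbw) (csym hc).
have hvK : forall z, z \in W -> connect (radj K) v z.
  move=> z hz; case: (eqVneq z v) => [->|hzv]; first exact: connect0.
  apply: (connect_trans _ (connect_mono (subg_del K v) (c2 z hz hzv))).
  apply: (connect_mono (subdig_subg hB1K)).
  by move/connectedE: hbp1.1; apply.
have hbpK : block_prop K.
  apply: blockP_intro; first exact: indg_wf.
    apply/connectedE => y z hy hz; exact: connect_trans (csym (hvK y hy)) (hvK z hz).
  move=> w hw; apply/connectedE => y z; rewrite /= !in_setD1 => /andP[hyw hy] /andP[hzw hz].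
  case: (eqVneq w v) => [ewv|hwv].
    rewrite ewv in hyw hzw *.
    exact: connect_trans (csym (c2 y hy hyw)) (c2 z hz hzw).
  exact: connect_trans (csym (c1 w y hwv hy hyw)) (c1 w z hwv hz hzw).
have e1 : K = B1 by apply: hmax1.
have e2 : K = B2 by apply: hmax2.
by rewrite -e1 -e2.
Qed.

End Proofs3.

Section Proofs4.
Variable V : finType.
Implicit Types (G H K C : dgraph V) (x y u v w z : V) (S W : {set V}).

Lemma other_vertex G B1 B2 v : is_digraph G -> block B1 G -> block B2 G -> B1 <> B2 ->
  v \in vset B1 -> v \in vset B2 -> exists2 a, a \in vset B1 & a != v.
Proof.
move=> hG hB1 hB2 hne hv1 hv2.
case/boolP: [exists a in vset B1, a != v] => [/exists_inP [a h1 h2]|/exists_inPn hn].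
  by exists a.
exfalso; apply: hne.
case: (hB1) => hB1G hbp1 hmax1; case: (hB2) => hB2G hbp2 hmax2.
have hall : forall z, z \in vset B1 -> z = v by move=> z /hn; rewrite negbK => /eqP.
symmetry; apply: hmax1 => //; rewrite /subdigraph (subdig_wf hB1G) /=.
apply/andP; split.
  by apply/subsetP => z /hall ->.
apply/subsetP => e he.
case/and3P: hB1G => /wfP hw _ /subsetP hs.
case/andP: (hw e he) => /hall h1 /hall h2.
by apply: (block_induced hG hB2); [exact: (hs _ he) | rewrite h1 | rewrite h2].
Qed.

Lemma cut_A G B1 B2 v : is_digraph G -> block B1 G -> block B2 G -> B1 <> B2 ->
  v \in vset B1 -> v \in vset B2 -> cut_vertex G v.
Proof.
move=> hG hB1 hB2 hne hv1 hv2.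
case: (other_vertex hG hB1 hB2 hne hv1 hv2) => a ha1 hav.
case: (other_vertex hG hB2 hB1 (fun e => hne (esym e)) hv2 hv1) => b hb2 hbv.
have hnab : ~ connect (radj (del_vertex G v)) a b.
  by move=> h; apply: hne; apply: (Akey hG hB1 hB2 hv1 hv2 ha1 hav hb2 hbv h).
case: (hB1) => hB1G hbp1 _; case: (hB2) => hB2G hbp2 _.
have hV1 : vset B1 \subset vset G by case/and3P: hB1G.
have hV2 : vset B2 \subset vset G by case/and3P: hB2G.
have hvG : v \in vset G by exact: (subsetP hV1).
have haG : a \in vset (del_vertex G v) by rewrite /= in_setD1 hav (subsetP hV1).
have hbG : b \in vset (del_vertex G v) by rewrite /= in_setD1 hbv (subsetP hV2).
have hva : connect (radj G) v a.
  apply: (connect_mono (subdig_subg hB1G)); by move/connectedE: hbp1.1; apply.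
have hvb : connect (radj G) v b.
  apply: (connect_mono (subdig_subg hB2G)); by move/connectedE: hbp2.1; apply.
split => //.
rewrite (ncompE hG hvG) (ncompE (wf_del v hG) haG).
pose f (Y : {set V}) := [set z | [exists y in Y, connect (radj G) y z]].
have hf : forall x, f (cls (del_vertex G v) x) = cls G x.
  move=> x; apply/setP => z; rewrite [RHS]inE [LHS]inE; apply/idP/idP.
    case/exists_inP => y; rewrite inE => hxy hyz.
    exact: connect_trans (connect_mono (subg_del G v) hxy) hyz.
  by move=> h; apply/exists_inP; exists x; rewrite ?inE ?connect0.
have -> : classes G = f @: classes (del_vertex G v).
  apply/setP => Y; apply/imsetP/imsetP.
    case=> x hx ->; case: (eqVneq x v) => [->|hxv].
      exists (cls (del_vertex G v) a); first by apply/imsetP; exists a.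
      by rewrite hf; apply: cls_eq.
    exists (cls (del_vertex G v) x); first by apply/imsetP; exists x; rewrite //= in_setD1 hxv.
    by rewrite hf.
  case=> Y' /imsetP [x hx ->] ->; exists x; last by rewrite hf.
  by move: hx; rewrite /= in_setD1 => /andP[].
rewrite ltn_neqAle leq_imset_card andbT; apply/negP => /imset_injP hinj.
have : cls (del_vertex G v) a = cls (del_vertex G v) b.
  apply: hinj; [by apply/imsetP; exists a | by apply/imsetP; exists b |].
  by rewrite !hf -(cls_eq hva) -(cls_eq hvb).
move/(congr1 (fun S => b \in S)); rewrite !inE connect0 => h.
by apply: hnab; rewrite h.
Qed.

End Proofs4.

Lemma card_fam (V : finType) (k : nat) (F : V -> {set option 'I_k}) :
  #|[set a : {ffun V -> option 'I_k} | [forall v, a v \in F v]]| = \prod_(v : V) #|F v|.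
Proof.
have := card_family (fun v => mem (F v)).
rewrite foldrE big_map big_enum /= => <-.
apply: eq_card => a; rewrite inE.
apply/forallP/familyP => h v; exact: h.
Qed.

Lemma cut_index_noncut (V : finType) (G : dgraph V) v : is_digraph G -> v \in vset G ->
  ~ cut_vertex G v -> cut_index G v = 1.
Proof.
move=> hG hv hnc; apply/eqP; rewrite eqn_leq; apply/andP; split.
  rewrite leqNgt; apply/negP => /card_gt1P [H1 [H2 [h1 h2 hne]]].
  rewrite !inE in h1 h2; case/andP: h1 => /asboolP hb1 hv1; case/andP: h2 => /asboolP hb2 hv2.
  apply: hnc; apply: (cut_A hG hb1 hb2 _ hv1 hv2); exact/eqP.
case: (vertex_in_block hv) => H [hb hvH]; apply/card_gt0P; exists H.
by rewrite inE hvH andbT; apply/asboolP.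
Qed.

Theorem mainTheorem1 (V : finType) (G : dgraph V) (HG : is_digraph G)
    (k : nat) (B : 'I_k -> dgraph V) (Binj : injective B)
    (Bblocks : forall H : dgraph V, block H G <-> exists i, H = B i)
    (t : nat) (c : 'I_t -> V) (cinj : injective c)
    (ccut : forall v : V, cut_vertex G v <-> exists j, v = c j) :
  #|[set P : {ffun 'I_k -> dgraph V} | B_partition G B P]|
    = \prod_(j < t) cut_index G (c j).
Proof.
have hBb : forall i, block (B i) G by move=> i; apply/Bblocks; exists i.
have hBsub : forall i, vset (B i) \subset vset G by move=> i; case: (hBb i) => /and3P[].
pose Fv (v : V) : {set option 'I_k} :=
  if v \in vset G then Some @: [set i | v \in vset (B i)] else [set None].
pose FA := [set a : {ffun V -> option 'I_k} | [forall v, a v \in Fv v]].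
pose phi (a : {ffun V -> option 'I_k}) : {ffun 'I_k -> dgraph V} :=
  [ffun i => indg G [set v | a v == Some i]].
have FAP : forall a, a \in FA -> forall v i, a v = Some i ->
    v \in vset G /\ v \in vset (B i).
  move=> a; rewrite inE => /forallP ha v i hai; move: (ha v); rewrite /Fv hai.
  case: ifP => hv; last by rewrite inE.
  by case/imsetP => j; rewrite inE => hj [->].
have FAS : forall a, a \in FA -> forall v, v \in vset G -> exists i, a v = Some i.
  move=> a; rewrite inE => /forallP ha v hv; move: (ha v); rewrite /Fv hv.
  by case/imsetP => j _ ->; exists j.
have step1 : [set P | B_partition G B P] = phi @: FA.
  apply/setP => P; rewrite inE; apply/idP/imsetP.
    case/and3P => /forallP hsub /forallP hdisj /eqP hcov.
    pose a := [ffun v => [pick i | v \in vset (P i)]].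
    have hPG : forall i, vset (P i) \subset vset G.
      by move=> i; case/andP: (hsub i) => /andP[/and3P[]]. 
    have hdj : forall i j v, v \in vset (P i) -> v \in vset (P j) -> i = j.
      move=> i j v hi hj; case: (eqVneq i j) => // hij.
      move: (hdisj i) => /forallP /(_ j) /implyP /(_ hij) hd.
      by move: (disjointFr hd hi); rewrite hj.
    have ha : forall v i, (a v == Some i) = (v \in vset (P i)).
      move=> v i; rewrite ffunE; case: pickP => [j hj|hn].
        apply/eqP/idP => [[<-] //|hi]; by rewrite (hdj _ _ _ hj hi).
      by rewrite (hn i).
    exists a.
      rewrite inE; apply/forallP => v; rewrite /Fv; case: ifP => hv.
        move: hv; rewrite -hcov => /bigcupP [i _ hi].
        have /eqP -> : a v == Some i by rewrite ha.
        apply/imsetP; exists i => //; rewrite inE.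
        by case/andP: (hsub i) => _ /and3P [_ /subsetP h _]; apply: h.
      rewrite ffunE; case: pickP => [j hj|_]; last by rewrite inE.
      by move: hv; rewrite (subsetP (hPG j) _ hj).
    apply/ffunP => i; rewrite ffunE; apply: dg_eq => /=.
      by apply/setP => v; rewrite inE ha.
    apply/setP => -[x y]; rewrite inE /= !inE !ha.
    case/andP: (hsub i) => /andP [hsubG /forall_inP hind] _.
    case/and3P: hsubG => /wfP hw _ /subsetP hs.
    apply/idP/and3P => [he|[he h1 h2]].
      by rewrite (hs _ he); case/andP: (hw _ he).
    by move: (hind x h1) => /forall_inP /(_ y h2) /implyP; apply.
  case=> a ha ->.
  rewrite /B_partition; apply/and3P; split.
  - apply/forallP => i; rewrite ffunE; set S := [set v | a v == Some i].
    have hSG : S \subset vset G.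
      by apply/subsetP => v; rewrite inE => /eqP /(FAP a ha) [].
    have hSB : S \subset vset (B i).
      by apply/subsetP => v; rewrite inE => /eqP /(FAP a ha) [].
    apply/andP; split.
      rewrite /induced_sub indg_sub //=; apply/forall_inP => u hu.
      apply/forall_inP => w hw; apply/implyP => he; by rewrite inE he hu hw.
    rewrite /subdigraph indg_wf hSB /=; apply/subsetP => e.
    rewrite inE => /and3P[he h1 h2].
    by apply: (block_induced HG (hBb i) he); apply: (subsetP hSB).
  - apply/forallP => i; apply/forallP => j; apply/implyP => hij; rewrite !ffunE /=.
    rewrite -setI_eq0; apply/eqP/setP => v; rewrite !inE.
    apply/negbTE; apply/negP => /andP[/eqP -> /eqP [eij]].
    by move: hij; rewrite eij eqxx.
  - apply/eqP/setP => v; apply/bigcupP/idP.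
      by case=> i _; rewrite ffunE /= inE => /eqP /(FAP a ha) [].
    move=> hv; case: (FAS a ha v hv) => i hi; exists i => //.
    by rewrite ffunE /= inE hi.
have step2 : {in FA &, injective phi}.
  move=> a b ha hb heq; apply/ffunP => v.
  have h : forall i, (a v == Some i) = (b v == Some i).
    move=> i; move: (congr1 (fun P : {ffun 'I_k -> dgraph V} => v \in vset (P i)) heq).
    by rewrite /phi !ffunE /= !inE.
  case Ea: (a v) => [i|]; case Eb: (b v) => [j|] //.
  - by move: (h i); rewrite Ea Eb eqxx => /esym/eqP.
  - by move: (h i); rewrite Ea Eb eqxx.
  - by move: (h j); rewrite Ea Eb eqxx.
rewrite step1 (card_in_imset step2) card_fam.
have hFv : forall v, #|Fv v| = if v \in vset G then cut_index G v else 1.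
  move=> v; rewrite /Fv; case: ifP => hv; last by rewrite cards1.
  rewrite card_imset; last by move=> i j [].
  rewrite /cut_index -(card_imset _ Binj); apply: eq_card => H.
  rewrite !inE; apply/imsetP/andP.
    by case=> i; rewrite inE => hi ->; split => //; apply/asboolP.
  by case=> /asboolP /Bblocks [i ->] hi; exists i; rewrite ?inE.
rewrite (bigID (fun v => v \in c @: [set: 'I_t])) /=.
rewrite [X in _ * X]big1 ?muln1; last first.
  move=> v hv; rewrite hFv; case: ifP => // hvG.
  apply: cut_index_noncut => // /ccut [j ej]; move: hv; rewrite ej.
  by rewrite imset_f ?inE.
rewrite big_imset /=; last by move=> i j _ _; apply: cinj.
apply: eq_big => [j|j _]; first by rewrite inE.
rewrite hFv; case: ifP => // hn.
by case: (proj2 (ccut (c j)) (ex_intro _ j erefl)) => /negP; rewrite hn.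
Qed.
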